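(* Let $(X_{i,j})_{i,j\ge1}$ be an infinite double array of identically distributed random variables with mean $0$, variance $1$ and $\mathbf{E}\big(|X_{i,j}|^4(\log|X_{i,j}|)^{2+2\varepsilon}\big)<\infty$ for some $\varepsilon>0$. Let $p=p(n)$ with $p/n\to\rho<\infty$, and let $X_n$ be the upper-left $n\times p$ corner of this array. Let $T_n$ be the $n\times p$ matrix with entries $X_{i,j}1_{|X_{i,j}|<\sqrt n/(\log n)^{(1+\varepsilon)/2}}$. Then $P(X_n\ne T_n\text{ infinitely often})=0$. *)

(* Defs.v *)
From mathcomp Require Import all_boot all_order all_algebra.
From mathcomp Require Import all_classical all_reals all_analysis.
Set Implicit Arguments. Unset Strict Implicit. Unset Printing Implicit Defensive.
Import Order.TTheory GRing.Theory Num.Theory.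
Local Open Scope classical_set_scope.
Local Open Scope ring_scope.

Definition trunc_level (R : realType) (eps : R) (n : nat) : R :=
  Num.sqrt n%:R / (ln n%:R) `^ ((1 + eps) / 2).

(* The event {X_n <> T_n}: some entry of the upper-left n x p(n) corner
   (indices 0-based: i < n, j < p n) is not below the truncation level,
   i.e. differs from its truncation X_{ij} 1_{|X_{ij}| < level}. *)
Definition corner_ne_trunc d (T : measurableType d) (R : realType)
  (X : nat -> nat -> T -> R) (p : nat -> nat) (eps : R) (n : nat) : set T :=
  [set w | exists i j, (i < n)%N /\ (j < p n)%N /\
      X i j w != (if `|X i j w| < trunc_level eps n then X i j w else 0)].

Definition infinitely_often T (A : nat -> set T) : set T :=
  [set w | forall N, exists2 n, (N <= n)%N & A n w].

(* Main.v *)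
Require Import Defs.
From mathcomp Require Import all_boot all_order all_algebra.
From mathcomp Require Import all_classical all_reals all_analysis.
From mathcomp Require Import measurable_realfun.
From mathcomp Require Import lra ring.
Import Order.TTheory GRing.Theory Num.Theory.
Local Open Scope classical_set_scope.
Local Open Scope ring_scope.

Definition Uex {T} (F : nat -> set T) (m : nat) : set T :=
  [set w | exists i, (i < m)%N /\ F i w].

Lemma ex_lt_measurable d (T : measurableType d) (F : nat -> set T) m :
  (forall i, measurable (F i)) -> measurable (Uex F m).
Proof.
move=> mF; rewrite (_ : Uex F m = \bigcup_(i in `I_m) F i).
  by apply: bigcup_measurable => i _; exact: mF.
by apply/seteqP; split => w [i] /=; [case=> ? ?|]; exists i.
Qed.

Lemma ex_lt_sub d (T : measurableType d) (R : realType)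
  (mu : {measure set T -> \bar R}) (F : nat -> set T) m :
  (forall i, measurable (F i)) ->
  (mu (Uex F m) <= \sum_(i < m) mu (F i))%E.
Proof.
move=> mF; apply: content_subadditive => //; first exact: ex_lt_measurable.
by rewrite -bigcup_mkord => w [i [? ?]]; exists i.
Qed.

Lemma meas_ge_norm (R : realType) (l : R) : measurable [set x : R | l <= `|x|].
Proof.
have := normr_measurable measurableT (measurable_itv `[l, +oo[).
by rewrite setTI (_ : _ @^-1` _ = [set x : R | l <= `|x|]) //; apply/seteqP; split => x /=; rewrite in_itv /= andbT.
Qed.

Lemma sum_cst (R : realType) (x : \bar R) m : (\sum_(i < m) x = m%:R%:E * x)%E.
Proof.
rewrite mule_natl; elim: m => [|m IH]; first by rewrite big_ord0.
by rewrite big_ord_recr IH muleS addeC.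
Qed.

Lemma key_ineq (R : realType) (eps : R) (n : nat) (y : R) :
  0 < eps -> 16 * (1 + eps) ^+ 2 <= ln n%:R -> trunc_level eps n <= y ->
  n%:R ^+ 2 <= 4 `^ (2 + 2 * eps) * (y ^+ 4 * `|ln y| `^ (2 + 2 * eps)).
Proof.
move=> e0 hL hy.
set a := 1 + eps; set L := ln (n%:R : R); set e := 2 + 2 * eps.
have a0 : 0 < a by rewrite /a; lra.
have L0 : 0 < L by apply: lt_le_trans hL; rewrite mulr_gt0 // exprn_gt0.
have n1 : 1 < n%:R :> R.
  by rewrite ltNge; apply/negP => /ln_le0; rewrite -/L leNgt L0.
have n0 : 0 < n%:R :> R by lra.
set sq := Num.sqrt (n%:R : R); set pw := L `^ ((1 + eps) / 2).
have sq0 : 0 < sq by rewrite sqrtr_gt0.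
have pw0 : 0 < pw by rewrite powR_gt0.
have lvl0 : 0 < trunc_level eps n by rewrite /trunc_level -/sq -/L -/pw divr_gt0.
have y0 : 0 < y by apply: lt_le_trans hy.
set s := Num.sqrt L.
have s0 : 0 < s by rewrite sqrtr_gt0.
have ss : s * s = L by rewrite -expr2 sqr_sqrtr // ltW.
have lnL : ln L <= 2 * s.
  rewrite -ss -expr2 lnXn // mulr2n; have := ln_sublinear s0; lra.
have as_ : 4 * a <= s.
  rewrite /s -(@ger0_norm _ (4 * a)); last by lra.
  rewrite -sqrtr_sqr ler_sqrt; last exact: ltW.
  have -> : (4 * a) ^+ 2 = 16 * (1 + eps) ^+ 2 by rewrite /a; ring.
  exact: hL.
have lnlvl : L / 4 <= ln (trunc_level eps n).
  have lsq : ln sq = L / 2.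
    by rewrite /sq -powR12_sqrt ?ln_powR 1?mulrC //; exact: ltW.
  rewrite /trunc_level -/sq -/L -/pw ln_div ?posrE // lsq.
  rewrite /pw ln_powR -/L -/a.
  have h1 : a / 2 * ln L <= a / 2 * (2 * s) by apply: ler_wpM2l => //; lra.
  have h2 : (4 * a) * s <= s * s by apply: ler_wpM2r => //; exact: ltW.
  have : a / 2 * ln L <= L / 4.
    apply: (le_trans h1); rewrite -[X in _ <= X / 4]ss.
    rewrite (_ : a / 2 * (2 * s) = (4 * a * s) / 4); last by field.
    by apply: ler_wpM2r.
  lra.
have lny : L / 4 <= ln y.
  by apply: le_trans lnlvl _; rewrite ler_ln ?posrE.
have lny0 : 0 < ln y by lra.
have G : L `^ e / 4 `^ e <= `|ln y| `^ e.
  rewrite gtr0_norm //; apply: le_trans (ge0_ler_powR _ _ _ lny); last 3 first.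
  - by rewrite /e; lra.
  - by rewrite nnegrE; lra.
  - by rewrite nnegrE; lra.
  rewrite powRM; [|lra|lra].
  rewrite ler_pM2l ?powR_gt0 //.
  have h : (4^-1 : R) `^ e * 4 `^ e = 1 by rewrite -powRM ?mulVf ?powR1 //; lra.
  have F0 : 0 < (4 : R) `^ e by rewrite powR_gt0.
  suff -> : (4^-1 : R) `^ e = (4 `^ e)^-1 by [].
  have -> : (4 `^ e)^-1 = ((4^-1 : R) `^ e * 4 `^ e) * (4 `^ e)^-1 by rewrite h mul1r.
  by rewrite mulfK // gt_eqF.
have Y : n%:R ^+ 2 / L `^ e <= y ^+ 4.
  have -> : n%:R ^+ 2 / L `^ e = trunc_level eps n ^+ 4.
    rewrite /trunc_level -/sq -/L -/pw expr_div_n.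
    have -> : sq ^+ 4 = n%:R ^+ 2 by rewrite /sq (_ : 4 = 2 * 2)%N // exprM sqr_sqrtr // ltW.
    rewrite /pw -[X in _ = _ / X]powR_mulrn ?powR_ge0 // -powRrM /e.
    by congr (_ / _ `^ _); rewrite /a; field.
  by rewrite lerXn2r // ?nnegrE ltW.
have E0 : 0 < L `^ e by rewrite powR_gt0.
have F0 : 0 < (4 : R) `^ e by rewrite powR_gt0.
apply: le_trans (_ : 4 `^ e * (n%:R ^+ 2 / L `^ e * (L `^ e / 4 `^ e)) <= _).
  have hE := gt_eqF E0; have hF := gt_eqF F0.
  rewrite le_eqVlt; apply/orP; left; apply/eqP; field; by rewrite hE hF.
apply: ler_wpM2l; first exact: ltW.
apply: ler_pM => //.
- by rewrite divr_ge0 // ltW // exprn_gt0.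
- by rewrite divr_ge0 // ltW.
Qed.
Lemma geom_partial (R : realType) (M : R) : 0 <= M -> forall n,
  \sum_(0 <= k < n) (4 ^+ k * (4 ^+ k <= M)%R%:R) <= 4 / 3 * M /\
  \sum_(0 <= k < n) (4 ^+ k * (4 ^+ k <= M)%R%:R) <= (4 ^+ n - 1) / 3 :> R.
Proof.
move=> M0; elim=> [|n [IH1 IH2]].
  by rewrite big_geq // expr0; split; lra.
rewrite big_nat_recr //= exprS.
have p0 : 0 <= 4 ^+ n :> R by rewrite exprn_ge0.
case: (leP (4 ^+ n) M) => h; rewrite ?mulr1 ?mulr0 ?addr0; split; lra.
Qed.

Lemma geom_bound (R : realType) (M c : R) : 0 <= M -> 0 <= c ->
  (\sum_(k <oo) ((c * (4 ^+ k * (4 ^+ k <= M)%R%:R))%:E) <= (c * (4 / 3 * M))%:E)%E.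
Proof.
move=> M0 c0; apply: lime_le.
  by apply: is_cvg_nneseries => n _ _; rewrite lee_fin mulr_ge0 // mulr_ge0 // exprn_ge0.
apply: nearW => n; rewrite sumEFin lee_fin -mulr_sumr ler_wpM2l //.
by case: (@geom_partial _ M M0 n).
Qed.
Arguments ex_lt_sub {d T R} mu {F m}.
Arguments key_ineq {R eps n y}.
Arguments geom_bound {R M c}.
Theorem lemma2 (d : measure_display) (T : measurableType d) (R : realType)
  (P : probability T R) (X : nat -> nat -> {RV P >-> R})
  (eps rho : R) (p : nat -> nat) :
  (* identically distributed *)
  (forall i j (B : set R), measurable B ->
      P (X i j @^-1` B) = P (X 0%N 0%N @^-1` B)) ->
  (* mean 0, variance 1 *)
  (forall i j, ('E_P[X i j] = 0)%E) ->
  (forall i j, variance P (X i j) = 1%E) ->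
  (* E(|X|^4 (log|X|)^(2+2eps)) < oo, for some eps > 0 *)
  0 < eps ->
  (forall i j, P.-integrable setT
      (fun w => (`|X i j w| ^+ 4 * `|ln `|X i j w| | `^ (2 + 2 * eps))%:E)) ->
  (* p / n -> rho < oo *)
  (fun n : nat => (p n)%:R / n%:R : R) @ \oo --> (rho : R^o) ->
  P (infinitely_often (corner_ne_trunc (fun i j => X i j : T -> R) p eps)) = 0%E.
Proof.
move=> hid _ _ e0 hint hp.
have [K [N1 HK]] : exists K N1 : nat, forall n, (N1 <= n)%N -> (p n <= K * n)%N.
  set K := Num.bound (`|rho| + 1).
  have hK : `|rho| + 1 < K%:R by apply: archi_boundP; rewrite addr_ge0.
  have [N1 _ HN1] := cvgr_lt rho hp (rho + 1) (ltr_pwDr (ltr01 : 0 < 1) (lexx rho) : rho < rho + 1)%R.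
  exists K, N1.+1 => n hn.
  have n0 : (0 < n%:R :> R) by rewrite ltr0n (leq_trans _ hn).
  have := HN1 n (ltnW hn); rewrite /= ltr_pdivrMr // => h.
  have : (p n)%:R < (K * n)%:R :> R.
    apply: (lt_le_trans h); rewrite natrM ler_wpM2r ?ltW //.
    by apply: le_lt_trans hK; rewrite lerD2r ler_norm.
  by rewrite ltr_nat => /ltnW.
have [N0 HN0] : exists N0 : nat, forall n, (N0 <= n)%N ->
    16 * (1 + eps) ^+ 2 <= ln (n%:R : R).
  exists (Num.bound (expR (16 * (1 + eps) ^+ 2))) => n hn.
  have h := archi_boundP (ltW (expR_gt0 (16 * (1 + eps) ^+ 2))).
  have h' : expR (16 * (1 + eps) ^+ 2) < n%:R.
    by apply: (lt_le_trans h); rewrite ler_nat.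
  rewrite -[X in X <= _]expRK ler_ln ?posrE ?expR_gt0 ?ltW //.
  exact: lt_trans (expR_gt0 _) h'.
set N := maxn N0 N1.
pose S (k : nat) := [set y : R | exists n, [/\ (2 ^ k <= n)%N, (n < 2 ^ k.+1)%N,
   (N <= n)%N & trunc_level eps n <= `|y|]].
have mS k : measurable (S k).
  rewrite (_ : S k = \bigcup_(n in [set n | [/\ (2 ^ k <= n)%N, (n < 2 ^ k.+1)%N & (N <= n)%N]])
      [set y : R | trunc_level eps n <= `|y|]).
    by apply: bigcup_measurable => n _; exact: meas_ge_norm.
  by apply/seteqP; split => y /= [n]; [case=> *; exists n|case=> *; exists n].
pose B k := Uex (fun i => Uex (fun j => X i j @^-1` S k) (K * 2 ^ k.+1)) (2 ^ k.+1).
have mXS i j k : measurable (X i j @^-1` S k) := measurable_funPTI (X i j) (mS k).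
have mB k : measurable (B k).
  by apply: ex_lt_measurable => i; apply: ex_lt_measurable => j; exact: mXS.
set A := corner_ne_trunc (fun i j => X i j : T -> R) p eps.
have mA n : measurable (A n).
  have -> : A n = Uex (fun i => Uex (fun j => X i j @^-1`
      ([set x | trunc_level eps n <= `|x|] `&` ~` [set 0])) (p n)) n.
    apply/seteqP; split => w /=.
    - case=> i [j [hi [hj hX]]]; exists i; split => //; exists j; split => //=.
      move: hX; case: ltP; rewrite ?eqxx // => h1 /eqP h2; by split.
    - case=> i [hi [j [hj [h1 h2]]]]; exists i, j; do 2 split => //.
      by rewrite ltNge h1 /=; apply/eqP.
  apply: ex_lt_measurable => i; apply: ex_lt_measurable => j; apply: measurable_funPTI.
  apply: measurableI; first exact: meas_ge_norm.
  by apply: measurableC; exact: measurable_set1.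
have io_sub : infinitely_often A `<=` lim_sup_set B.
  move=> w hw M _.
  have [n hn hAn] := hw (maxn N (2 ^ M)).
  have n0 : (0 < n)%N.
    by apply: leq_trans hn; apply: leq_trans (leq_maxr _ _); rewrite expn_gt0.
  set k := trunc_log 2 n.
  have h1 : (2 ^ k <= n)%N := trunc_logP (ltnSn 1) n0.
  have h2 : (n < 2 ^ k.+1)%N := trunc_log_ltn n (ltnSn 1).
  have hNn : (N <= n)%N := leq_trans (leq_maxl _ _) hn.
  exists k => /=.
    have : (2 ^ M < 2 ^ k.+1)%N.
      by apply: leq_ltn_trans h2; apply: leq_trans (leq_maxr _ _) hn.
    by rewrite ltn_exp2l.
  case: hAn => i [j [hi [hj hX]]]; exists i; split; first exact: ltn_trans hi h2.
  exists j; split.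
    apply: (leq_trans hj); apply: leq_trans (HK n _) _.
      exact: leq_trans (leq_maxr _ _) hNn.
    by rewrite leq_mul2l ltnW // orbT.
  exists n; split => //.
  by move: hX; case: ltP => //; rewrite eqxx.
have mio : measurable (infinitely_often A).
  have -> : infinitely_often A = lim_sup_set A.
    apply/seteqP; split => w; rewrite /lim_sup_set /=.
      by move=> h M _; have [n ? ?] := h M; exists n.
    by move=> h M; have [n ? ?] := h M I; exists n.
  by apply: bigcap_measurableType => k _; apply: bigcup_measurable => j _; exact: mA.
have mlsB : measurable (lim_sup_set B).
  by apply: bigcap_measurableType => k _; apply: bigcup_measurable => j _; exact: mB.
suff h0 : P (lim_sup_set B) = 0%E.
  apply/eqP; rewrite eq_le measure_ge0 andbT -h0; apply: le_measure => //; rewrite inE //.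
apply: lim_sup_set_cvg0 => //.
set Y := X 0%N 0%N.
set e := 2 + 2 * eps.
pose g := fun w => `|Y w| ^+ 4 * `|ln `|Y w| | `^ e.
set Cst := (4 : R) `^ e.
pose c k : R := (2 ^ k.+1 * (K * 2 ^ k.+1))%N%:R.
pose E k := Y @^-1` S k.
have ce k : c k = (4 * K)%:R * 4 ^+ k.
  have -> : (4 : R) ^+ k = 2 ^+ k * 2 ^+ k.
    by rewrite -exprMn; congr (_ ^+ _); ring.
  by rewrite /c !natrM !natrX exprS; ring.
have hB k : (P (B k) <= (c k)%:E * P (E k))%E.
  apply: le_trans (ex_lt_sub P _) _.
    by move=> i; apply: ex_lt_measurable => j; exact: mXS.
  apply: le_trans (_ : \sum_(i < 2 ^ k.+1) \sum_(j < K * 2 ^ k.+1) P (E k) <= _)%E.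
    apply: lee_sum => i _; apply: le_trans (ex_lt_sub P _) _; first by move=> j; exact: mXS.
    by apply: lee_sum => j _ /=; rewrite (hid i j (S k) (mS k)).
  by rewrite sum_cst sum_cst muleA -EFinM -natrM.
have c0 k : 0 <= c k by rewrite ler0n.
have mE k : measurable (E k) by exact: mXS.
have hint0 := hint 0%N 0%N.
move/integrableP: hint0 => [mg gint].
have g0 w : 0 <= g w by rewrite mulr_ge0 ?exprn_ge0 ?powR_ge0.
have gfin : (\int[P]_w (g w)%:E < +oo)%E.
  move: gint; rewrite (eq_integral (fun w => (g w)%:E)) //.
  by move=> w _; rewrite abse_EFin ger0_norm.
have step2 k : ((c k)%:E * P (E k) = \int[P]_w (c k * \1_(E k) w)%:E)%E.
  have := @integralZl_indic _ _ _ P setT measurableT (fun=> E k) (c k) _ (mE k).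
  rewrite /= => ->; last by move=> h; move: (c0 k); rewrite leNgt h.
  by rewrite integral_indic // setIT.
pose a : R := (4 * K)%:R * (4 / 3) * Cst.
have a0 : 0 <= a by rewrite /a mulr_ge0 ?powR_ge0 // mulr_ge0 //.
have pw w k : ((c k * \1_(E k) w)%:E <=
    ((4 * K)%:R * (4 ^+ k * (4 ^+ k <= Cst * g w)%R%:R))%:E)%E.
  rewrite lee_fin indicE; case: (boolP (w \in E k)) => hw; last first.
    by rewrite mulr0 mulr_ge0 // mulr_ge0 ?exprn_ge0.
  move: hw; rewrite inE => -[n [k1 k2 k3 k4]].
  have hn := key_ineq e0 (HN0 n (leq_trans (leq_maxl _ _) k3)) k4.
  have h4 : (4 : R) ^+ k <= Cst * g w.
    apply: le_trans hn.
    have -> : (4 : R) ^+ k = (2 ^ k)%:R ^+ 2.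
      by rewrite natrX -exprM mulnC exprM; congr (_ ^+ _); ring.
    by rewrite lerXn2r ?nnegrE ?ler0n // ler_nat.
  by rewrite h4 !mulr1 ce.
have step4 w : (\sum_(k <oo) (c k * \1_(E k) w)%:E <= a%:E * (g w)%:E)%E.
  apply: le_trans (lee_nneseries
    (v := fun k => ((4 * K)%:R * (4 ^+ k * (4 ^+ k <= Cst * g w)%R%:R))%:E) _ _) _.
  - by move=> k _ _; rewrite lee_fin mulr_ge0 // indicE.
  - by move=> k _; exact: pw.
  apply: le_trans (geom_bound _ _) _.
  - by rewrite mulr_ge0 ?powR_ge0.
  - by rewrite ler0n.
  by rewrite -EFinM lee_fin /a -!mulrA.
have mh k : measurable_fun setT (fun w => (c k * \1_(E k) w)%:E).
  apply/measurable_EFinP; apply: measurable_funM => //; exact: measurable_indic.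
have h0 k w : (0 <= (c k * \1_(E k) w)%:E)%E.
  by rewrite lee_fin mulr_ge0 // indicE.
apply: (@le_lt_trans _ _ (\sum_(k <oo) ((c k)%:E * P (E k)))%E).
  apply: lee_nneseries.
  - by move=> k _ _; exact: measure_ge0.
  - by move=> k _; exact: hB.
rewrite (@eq_eseriesr _ _ (fun k => \int[P]_w (c k * \1_(E k) w)%:E)%E); last first.
  by move=> k _; exact: step2.
rewrite -integral_nneseries //.
apply: le_lt_trans (@ge0_le_integral _ _ _ P setT measurableT _
   (fun w => a%:E * (g w)%:E)%E _ _ _ _) _.
- by move=> w _; exact: nneseries_ge0.
- exact: (@ge0_emeasurable_sum _ _ _ setT _ xpredT).
- exact: measurable_funeM.
- by move=> w _; exact: step4.
rewrite ge0_integralZl_EFin //.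
- by apply: lte_mul_pinfty => //; rewrite lee_fin.
- by move=> w _; rewrite lee_fin.
Qed.
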